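(* Let $\Gamma>1$ and let $(\rho_L,u_L,p_L)$, $(\rho_R,u_R,p_R)$ be two states with $\rho_L,\rho_R,p_L,p_R>0$ and $|u_L|,|u_R|<1$. Set $W_{L}=1/\sqrt{1-u_{L}^2}$, $W_{R}=1/\sqrt{1-u_{R}^2}$, and $z_1=\rho$, $z_2=\rho/p$, $z_3=u$ (evaluated at the left and right states). Define \[ \tilde F_1=\{\!\{z_1\}\!\}^{\ln}\{\!\{uW\}\!\}, \qquad \alpha = 1+\frac{1}{(\Gamma-1)\{\!\{z_2\}\!\}^{\ln}}, \] \[ Q=\{\!\{z_2\}\!\}\{\!\{W\}\!\}^2+\{\!\{z_2\}\!\}\{\!\{z_3\}\!\}\{\!\{W\}\!\}\,\mathcal L(z_3)-\{\!\{z_2\}\!\}\{\!\{uW\}\!\}\,\mathcal L(z_3), \] \[ \tilde F_2=Q^{-1}\Big[\alpha\{\!\{z_2\}\!\}\mathcal L(z_3)\tilde F_1+\{\!\{z_1\}\!\}\{\!\{W\}\!\}^2+\{\!\{z_1\}\!\}\{\!\{z_3\}\!\}\{\!\{W\}\!\}\mathcal L(z_3)\Big], \] \[ \tilde F_3=Q^{-1}\Big[\{\!\{z_1\}\!\}\{\!\{W\}\!\}\{\!\{uW\}\!\}+\{\!\{z_1\}\!\}\{\!\{z_3\}\!\}\{\!\{uW\}\!\}\mathcal L(z_3)+\alpha\tilde F_1\big(\{\!\{z_2\}\!\}\{\!\{W\}\!\}+\{\!\{z_2\}\!\}\{\!\{z_3\}\!\}\mathcal L(z_3)\big)\Big]. \]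 Then $Q=\{\!\{z_2\}\!\}W_LW_R>0$, so $\tilde{\mathbf F}=(\tilde F_1,\tilde F_2,\tilde F_3)^{T}$ is well defined, and it satisfies the entropy conservation condition \[ [\![\mathbf V]\!]^{T}\tilde{\mathbf F}=[\![\psi]\!]. \] Moreover $\tilde{\mathbf F}$ is consistent: if $(\rho_L,u_L,p_L)=(\rho_R,u_R,p_R)=(\rho,u,p)$, then $\tilde{\mathbf F}=(\rho W u,\ \rho h W^2u^2+p,\ \rho h W^2 u)^T$, which is the one-dimensional special relativistic hydrodynamics flux $\mathbf F(\mathbf U)$ evaluated at that state.
   Context: One-dimensional special relativistic hydrodynamics (units with speed of light $1$) with ideal equation of state $p=(\Gamma-1)\rho e$: conservative variables $\mathbf U=(D,m,E)^T$ with $D=\rho W$, $m=\rho hW^2u$, $E=\rho hW^2-p$, flux $\mathbf F(\mathbf U)=(Du,\,mu+p,\,m)^T$, where $W=1/\sqrt{1-u^2}$ is the Lorentz factor and $h=1+\Gamma p/((\Gamma-1)\rho)$ the specific enthalpy. Thermodynamic entropy $S=\ln p-\Gamma\ln\rho$; entropy variables $\mathbf V=\big(\frac{\Gamma-S}{\Gamma-1}+\frac{\rho}{p},\ \frac{\rho W u}{p},\ -\frac{\rho W}{p}\big)^T$ and potential $\psi=\rho W u$ (these correspond to the entropy pair $\eta=-\rho WS/(\Gamma-1)$, $q=-\rho uWS/(\Gamma-1)$). For a quantity $a$ taking values $a_L,a_R$ at the two states: jump $[\![a]\!]=a_R-a_L$; arithmetic mean $\{\!\{a\}\!\}=(a_L+a_R)/2$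 (so e.g. $\{\!\{uW\}\!\}=(u_LW_L+u_RW_R)/2$); for positive $a$, logarithmic mean $\{\!\{a\}\!\}^{\ln}=[\![a]\!]/[\![\ln a]\!]$ if $a_L\neq a_R$ and $\{\!\{a\}\!\}^{\ln}=a_L$ if $a_L=a_R$. The ''Lorentz mean'' is $\mathcal L(u)=\dfrac{u_L+u_R}{\sqrt{1-u_L^2}\sqrt{1-u_R^2}\big(\sqrt{1-u_L^2}+\sqrt{1-u_R^2}\big)}$, which satisfies $[\![W]\!]=\mathcal L(u)[\![u]\!]$; $\mathcal L(z_3)$ means $\mathcal L(u)$. *)

(* Defs.v *)
From Stdlib Require Import Reals Lra.
Open Scope R_scope.

Definition lorW (u : R) : R := 1 / sqrt (1 - u ^ 2).

Definition amean (aL aR : R) : R := (aL + aR) / 2.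

Definition jump (aL aR : R) : R := aR - aL.

Definition lnmean (aL aR : R) : R :=
  if Req_EM_T aL aR then aL else (aR - aL) / (ln aR - ln aL).

Definition lorMean (uL uR : R) : R :=
  (uL + uR) /
  (sqrt (1 - uL ^ 2) * sqrt (1 - uR ^ 2) * (sqrt (1 - uL ^ 2) + sqrt (1 - uR ^ 2))).

Definition enthalpy (G rho p : R) : R := 1 + G * p / ((G - 1) * rho).

Definition entropyS (G rho p : R) : R := ln p - G * ln rho.

Definition V1 (G rho u p : R) : R := (G - entropyS G rho p) / (G - 1) + rho / p.
Definition V2 (G rho u p : R) : R := rho * lorW u * u / p.
Definition V3 (G rho u p : R) : R := - (rho * lorW u / p).

Definition psiPot (rho u : R) : R := rho * lorW u * u.

Definition consD (rho u : R) : R := rho * lorW u.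
Definition consM (G rho u p : R) : R := rho * enthalpy G rho p * (lorW u) ^ 2 * u.
Definition consE (G rho u p : R) : R := rho * enthalpy G rho p * (lorW u) ^ 2 - p.

Definition flux1 (G rho u p : R) : R := consD rho u * u.
Definition flux2 (G rho u p : R) : R := consM G rho u p * u + p.
Definition flux3 (G rho u p : R) : R := consM G rho u p.

Section NumFlux.
Variables (G rhoL uL pL rhoR uR pR : R).

Let z1m := amean rhoL rhoR.
Let z1ln := lnmean rhoL rhoR.
Let z2m := amean (rhoL / pL) (rhoR / pR).
Let z2ln := lnmean (rhoL / pL) (rhoR / pR).
Let z3m := amean uL uR.
Let Wm := amean (lorW uL) (lorW uR).
Let uWm := amean (uL * lorW uL) (uR * lorW uR).
Let Lz3 := lorMean uL uR.

Definition numF1 : R := z1ln * uWm.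
Definition alphaC : R := 1 + 1 / ((G - 1) * z2ln).
Definition Qden : R := z2m * Wm ^ 2 + z2m * z3m * Wm * Lz3 - z2m * uWm * Lz3.
Definition numF2 : R :=
  / Qden * (alphaC * z2m * Lz3 * numF1 + z1m * Wm ^ 2 + z1m * z3m * Wm * Lz3).
Definition numF3 : R :=
  / Qden * (z1m * Wm * uWm + z1m * z3m * uWm * Lz3
            + alphaC * numF1 * (z2m * Wm + z2m * z3m * Lz3)).
End NumFlux.

(* Main.v *)
Require Import Defs.
From Stdlib Require Import Reals Lra.
Open Scope R_scope.
Lemma pred2 (u a : R) (n : nat) : a^2 = 1 - u^2 -> u ^ (S (S n)) = u ^ n * (1 - a^2).
Proof. intros H. rewrite H. simpl. ring. Qed.

Ltac finish uL uR a b Ha Hb :=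
  apply Rminus_diag_uniq; field_simplify;
  [ unfold Rdiv; apply Rmult_eq_0_compat_r | repeat split; lra .. ];
  repeat rewrite (pred2 uL a _ Ha); repeat rewrite (pred2 uR b _ Hb); ring.

Lemma Qalg (uL uR a b : R) : 0 < a -> 0 < b -> a^2 = 1 - uL^2 -> b^2 = 1 - uR^2 ->
  ((1/a + 1/b)/2)^2 + ((uL+uR)/2) * ((1/a+1/b)/2) * ((uL+uR)/(a*b*(a+b)))
   - ((uL*(1/a) + uR*(1/b))/2) * ((uL+uR)/(a*b*(a+b))) = 1/a * (1/b).
Proof.
  intros ha hb Ha Hb. finish uL uR a b Ha Hb.
Qed.
Lemma Ealg (rL rR zL zR uL uR a b f al : R) : 0 < a -> 0 < b -> 0 < zL -> 0 < zR -> a^2 = 1 - uL^2 -> b^2 = 1 - uR^2 ->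
  let Wm := (1/a + 1/b)/2 in
  let uWm := (uL*(1/a) + uR*(1/b))/2 in
  let z3m := (uL+uR)/2 in
  let z1m := (rL+rR)/2 in
  let z2m := (zL+zR)/2 in
  let L := (uL+uR)/(a*b*(a+b)) in
  let Q := z2m * (1/a) * (1/b) in
  (rR - rL) * uWm + al * (zR - zL) * f
  + (zR * (1/b) * uR - zL * (1/a) * uL) * (/Q * (al * z2m * L * f + z1m * Wm^2 + z1m*z3m*Wm*L))
  + (- (zR * (1/b)) - - (zL * (1/a))) * (/Q * (z1m*Wm*uWm + z1m*z3m*uWm*L + al*f*(z2m*Wm + z2m*z3m*L)))
  = rR * (1/b) * uR - rL * (1/a) * uL.
Proof.
  intros ha hb hzL hzR Ha Hb Wm uWm z3m z1m z2m L Q.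
  unfold Q, L, z2m, z1m, z3m, uWm, Wm.
  finish uL uR a b Ha Hb.
Qed.

Lemma lnmean_jump x y : 0 < x -> 0 < y -> lnmean x y * (ln y - ln x) = y - x.
Proof.
  intros hx hy. unfold lnmean. destruct (Req_EM_T x y) as [e|ne].
  - subst. ring.
  - assert (ln y - ln x <> 0).
    { intro h. apply ne. apply ln_inv; auto. lra. }
    field. auto.
Qed.

Lemma lnmean_pos x y : 0 < x -> 0 < y -> 0 < lnmean x y.
Proof.
  intros hx hy. unfold lnmean. destruct (Req_EM_T x y) as [e|ne]; auto.
  destruct (Rlt_or_le x y) as [h|h].
  - assert (ln x < ln y) by (apply ln_increasing; auto).
    apply Rdiv_lt_0_compat; lra.
  - assert (y < x) by lra.
    assert (ln y < ln x) by (apply ln_increasing; auto).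
    replace ((y - x) / (ln y - ln x)) with ((x - y) / (ln x - ln y)) by (field; lra).
    apply Rdiv_lt_0_compat; lra.
Qed.

Lemma sqrt_facts u : Rabs u < 1 -> 0 < sqrt (1 - u^2) /\ sqrt (1 - u^2) ^ 2 = 1 - u^2.
Proof.
  intros h. apply Rabs_def2 in h.
  assert (0 < 1 - u^2) by nra.
  split. apply sqrt_lt_R0; auto.
  replace (sqrt (1 - u^2) ^ 2) with (sqrt (1 - u^2) * sqrt (1 - u^2)) by ring.
  apply sqrt_sqrt. lra.
Qed.

Theorem mainTheorem1 (G rhoL uL pL rhoR uR pR : R) :
  1 < G ->
  0 < rhoL -> 0 < rhoR -> 0 < pL -> 0 < pR ->
  Rabs uL < 1 -> Rabs uR < 1 ->
  (* Q = {{z2}} W_L W_R > 0 *)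
  Qden rhoL uL pL rhoR uR pR = amean (rhoL / pL) (rhoR / pR) * lorW uL * lorW uR /\
  0 < Qden rhoL uL pL rhoR uR pR /\
  (* entropy conservation [[V]]^T F~ = [[psi]] *)
  jump (V1 G rhoL uL pL) (V1 G rhoR uR pR) * numF1 rhoL uL rhoR uR
  + jump (V2 G rhoL uL pL) (V2 G rhoR uR pR) * numF2 G rhoL uL pL rhoR uR pR
  + jump (V3 G rhoL uL pL) (V3 G rhoR uR pR) * numF3 G rhoL uL pL rhoR uR pR
  = jump (psiPot rhoL uL) (psiPot rhoR uR) /\
  (* consistency *)
  ((rhoL = rhoR /\ uL = uR /\ pL = pR) ->
     numF1 rhoL uL rhoR uR = flux1 G rhoL uL pL /\
     numF2 G rhoL uL pL rhoR uR pR = flux2 G rhoL uL pL /\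
     numF3 G rhoL uL pL rhoR uR pR = flux3 G rhoL uL pL /\
     flux1 G rhoL uL pL = rhoL * lorW uL * uL /\
     flux2 G rhoL uL pL = rhoL * enthalpy G rhoL pL * lorW uL ^ 2 * uL ^ 2 + pL /\
     flux3 G rhoL uL pL = rhoL * enthalpy G rhoL pL * lorW uL ^ 2 * uL).

Proof.
  intros hG hrL hrR hpL hpR huL huR.
  destruct (sqrt_facts uL huL) as [ha Ha].
  destruct (sqrt_facts uR huR) as [hb Hb].
  set (a := sqrt (1 - uL^2)) in *.
  set (b := sqrt (1 - uR^2)) in *.
  assert (WL : lorW uL = 1 / a) by reflexivity.
  assert (WR : lorW uR = 1 / b) by reflexivity.
  assert (LM : lorMean uL uR = (uL + uR) / (a * b * (a + b))) by reflexivity.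
  assert (hzL : 0 < rhoL / pL) by (apply Rdiv_lt_0_compat; auto).
  assert (hzR : 0 < rhoR / pR) by (apply Rdiv_lt_0_compat; auto).
  set (zL := rhoL / pL) in *.
  set (zR := rhoR / pR) in *.
  assert (HQ : Qden rhoL uL pL rhoR uR pR = (zL + zR) / 2 * (1 / a) * (1 / b)).
  { unfold Qden. fold zL zR. unfold amean. rewrite WL, WR, LM.
    replace ((zL+zR)/2 * (1/a) * (1/b)) with ((zL+zR)/2 * (1/a*(1/b))) by ring.
    rewrite <- (Qalg uL uR a b ha hb Ha Hb). ring. }
  split; [ unfold amean; rewrite HQ, WL, WR; reflexivity | ].
  split.
  { rewrite HQ. apply Rmult_lt_0_compat. apply Rmult_lt_0_compat. lra.
    apply Rdiv_lt_0_compat; lra. apply Rdiv_lt_0_compat; lra. }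
  split.
  -
    assert (HV1 : jump (V1 G rhoL uL pL) (V1 G rhoR uR pR) * numF1 rhoL uL rhoR uR
       = (rhoR - rhoL) * amean (uL * lorW uL) (uR * lorW uR)
         + alphaC G rhoL pL rhoR pR * (zR - zL) * numF1 rhoL uL rhoR uR).
    { unfold jump, V1, entropyS, numF1, alphaC. fold zL zR.
      assert (lz1 : ln zL = ln rhoL - ln pL) by (unfold zL, Rdiv; rewrite ln_mult, ln_Rinv; [ring | auto | auto | apply Rinv_0_lt_compat; auto]).
      assert (lz2 : ln zR = ln rhoR - ln pR) by (unfold zR, Rdiv; rewrite ln_mult, ln_Rinv; [ring | auto | auto | apply Rinv_0_lt_compat; auto]).
      pose proof (lnmean_jump rhoL rhoR hrL hrR) as J1.
      pose proof (lnmean_jump zL zR hzL hzR) as J2.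
      pose proof (lnmean_pos zL zR hzL hzR) as P2.
      replace (ln pL) with (ln rhoL - ln zL) by lra.
      replace (ln pR) with (ln rhoR - ln zR) by lra.
      fold zL zR.
      match goal with |- ?X * _ = _ => replace X with ((ln rhoR - ln rhoL) + (ln zR - ln zL)/(G-1) + (zR - zL)) by (field; lra) end.
      rewrite <- J1, <- J2. field. split; lra. }
    rewrite HV1.
    unfold numF2, numF3. fold zL zR. rewrite HQ.
    assert (E2 : jump (V2 G rhoL uL pL) (V2 G rhoR uR pR) = zR * (1/b) * uR - zL * (1/a) * uL).
    { unfold jump, V2. rewrite WL, WR. unfold zL, zR. field. split; lra. }
    assert (E3 : jump (V3 G rhoL uL pL) (V3 G rhoR uR pR) = - (zR * (1/b)) - - (zL * (1/a))).
    { unfold jump, V3. rewrite WL, WR. unfold zL, zR. field. split; lra. }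
    assert (E4 : jump (psiPot rhoL uL) (psiPot rhoR uR) = rhoR * (1/b) * uR - rhoL * (1/a) * uL).
    { unfold jump, psiPot. rewrite WL, WR. reflexivity. }
    rewrite E2, E3, E4. unfold amean. rewrite WL, WR, LM.
    exact (Ealg rhoL rhoR zL zR uL uR a b _ _ ha hb hzL hzR Ha Hb).
  - intros [e1 [e2 e3]]. subst rhoR uR pR.
    assert (lnm : forall x, lnmean x x = x).
    { intro x. unfold lnmean. destruct (Req_EM_T x x); [reflexivity | contradiction]. }
    assert (Fa : numF1 rhoL uL rhoL uL = rhoL * (1/a) * uL).
    { unfold numF1. rewrite lnm. unfold amean. rewrite WL. field. lra. }
    change b with a in *. change zR with zL in *.
    assert (alp : alphaC G rhoL pL rhoL pL = 1 + 1 / ((G - 1) * zL)).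
    { unfold alphaC. rewrite lnm. reflexivity. }
    unfold numF2, numF3, flux1, flux2, flux3, consD, consM, enthalpy.
    fold zL. rewrite HQ, Fa, alp. unfold amean. rewrite WL, LM.
    unfold zL.
    repeat split. all: try (field; repeat split; lra).
    apply Rminus_diag_uniq; field_simplify; [unfold Rdiv; apply Rmult_eq_0_compat_r; repeat rewrite (pred2 uL a _ Ha); ring | repeat split; lra ..].
Qed.
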